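(* Let $R$ be an $n$-ary relation on a domain $\mathcal{D}$ with finite ternarity that has no unary Cartesian factor. Then $\mathrm{ter}(R)$ and $n$ have the same parity.
   Context: Relations are attributed: $R\subseteq\mathcal{D}^\Sigma$, $\Sigma$ finite, arity $n=|\Sigma|$; $\pi_\Gamma$ restricts tuples to $\Gamma$; the join of $R_i\subseteq\mathcal{D}^{\Lambda_i}$ is $\{a\in\mathcal{D}^{\cup\Lambda_i}:a|_{\Lambda_i}\in R_i\ \forall i\}$. $R$ has a unary Cartesian factor if for some $i\in\Sigma$ there are $P\subseteq\mathcal{D}^{\{i\}}$ and $Q\subseteq\mathcal{D}^{\Sigma\setminus\{i\}}$ with $R=\{a: a|_{\{i\}}\in P,\ a|_{\Sigma\setminus\{i\}}\in Q\}$. Bonds: relations $R_i\subseteq\mathcal{D}^{\Lambda_i}$ are bondable if no attribute lies in three or more $\Lambda_i$; their bond is $\pi_\Gamma[R_1\Join\dots\Join R_m]$ where $\Gamma$ is the set of attributes lying in exactly one $\Lambda_i$. A bond is subternaric if all factors have arity $\le3$. The ternarity $\mathrm{ter}(R)$ is the minimal number of factors of arity $3$ over all representations of $R$ as a subternaric bond (a relation of arity $\le3$ counts as a one-factor bond of itself), and $\infty$ if none exists. *)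

(* Defs.v *)
From mathcomp Require Import all_boot finmap.
Set Implicit Arguments. Unset Strict Implicit. Unset Printing Implicit Defensive.
Local Open Scope fset_scope.

(* Attributes are natural numbers (an infinite supply, so that bonds may use
   internal attributes).  A tuple over the attribute set S is a partial
   function a : nat -> option D whose domain is exactly S. *)
Definition has_dom (D : Type) (S : pred nat) (a : nat -> option D) : Prop :=
  forall x, isSome (a x) = S x.

Definition restr (D : Type) (p : pred nat) (a : nat -> option D) : nat -> option D :=
  fun x => if p x then a x else None.

Record relation (D : Type) := Relation {
  scope : {fset nat};
  rmem : (nat -> option D) -> Prop }.

Definition wf_rel (D : Type) (R : relation D) : Prop :=
  forall a, rmem R a -> has_dom (fun x => x \in scope R) a.

Definition arity (D : Type) (R : relation D) : nat := #|` scope R |.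

Definition occ (D : Type) (Rs : seq (relation D)) (x : nat) : nat :=
  count (fun S => x \in scope S) Rs.

Definition bondable (D : Type) (Rs : seq (relation D)) : Prop :=
  forall x, occ Rs x <= 2.

Fixpoint in_all (D : Type) (Rs : seq (relation D)) (a : nat -> option D) : Prop :=
  match Rs with
  | [::] => True
  | F :: Rs' => rmem F (restr (fun x => x \in scope F) a) /\ in_all Rs' a
  end.

Definition join_mem (D : Type) (Rs : seq (relation D)) (a : nat -> option D) : Prop :=
  has_dom (fun x => 0 < occ Rs x) a /\ in_all Rs a.

Definition bond_mem (D : Type) (Rs : seq (relation D)) (b : nat -> option D) : Prop :=
  has_dom (fun x => occ Rs x == 1) b /\
  exists a, join_mem Rs a /\ (forall x, occ Rs x == 1 -> a x = b x).

Fixpoint all_factors (D : Type) (P : relation D -> Prop) (Rs : seq (relation D)) : Prop :=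
  match Rs with
  | [::] => True
  | F :: Rs' => P F /\ all_factors P Rs'
  end.

Definition represents (D : Type) (Rs : seq (relation D)) (R : relation D) : Prop :=
  bondable Rs /\
  all_factors (fun S => wf_rel S /\ arity S <= 3) Rs /\
  (forall x, (x \in scope R) = (occ Rs x == 1)) /\
  (forall b, rmem R b <-> bond_mem Rs b).

Definition ternary_count (D : Type) (Rs : seq (relation D)) : nat :=
  count (fun S => arity S == 3) Rs.

Definition finite_ternarity (D : Type) (R : relation D) : Prop :=
  exists Rs, represents Rs R.

Definition is_ter (D : Type) (R : relation D) (k : nat) : Prop :=
  (exists Rs, represents Rs R /\ ternary_count Rs = k) /\
  (forall Rs, represents Rs R -> k <= ternary_count Rs).

Definition has_unary_cartesian_factor (D : Type) (R : relation D) : Prop :=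
  exists i, i \in scope R /\
  exists (P Q : (nat -> option D) -> Prop),
    forall a, rmem R a <->
      (has_dom (fun x => x \in scope R) a /\
       P (restr (pred1 i) a) /\
       Q (restr (fun x => (x \in scope R) && (x != i)) a)).

(* Main.v *)
Require Import Defs.
From mathcomp Require Import all_boot finmap.
From mathcomp Require Import zify.
From Stdlib Require Import FunctionalExtensionality.
Set Implicit Arguments. Unset Strict Implicit. Unset Printing Implicit Defensive.
Local Open Scope fset_scope.

Lemma in_all_cat D (l1 l2 : seq (relation D)) a :
  in_all (l1 ++ l2) a <-> in_all l1 a /\ in_all l2 a.
Proof. elim: l1 => [|F l IH] /=; tauto. Qed.

Lemma all_factors_cat D P (l1 l2 : seq (relation D)) :
  all_factors P (l1 ++ l2) <-> all_factors P l1 /\ all_factors P l2.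
Proof. elim: l1 => [|F l IH] /=; tauto. Qed.

Lemma represents_ext D (Rs Rs' : seq (relation D)) R :
  (forall x, occ Rs x = occ Rs' x) ->
  (forall a, in_all Rs a <-> in_all Rs' a) ->
  (forall P, all_factors P Rs <-> all_factors P Rs') ->
  represents Rs R -> represents Rs' R.
Proof.
move=> Ho Hi Hf.
have Eo : occ Rs = occ Rs' by apply: functional_extensionality.
rewrite /represents /bondable /bond_mem /join_mem Eo.
move=> [Hb [Ha [Hs Hm]]]; split => //; split; first by apply/Hf.
split => // b; rewrite Hm.
split => -[H1 [a [[H2 H3] H4]]]; split=>//; exists a; split=> //; split=> //; by apply/Hi.
Qed.

Lemma represents_rot D (l1 l2 : seq (relation D)) F R :
  represents (l1 ++ F :: l2) R -> represents (F :: l1 ++ l2) R.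
Proof.
apply: represents_ext.
- by move=> x; rewrite /occ /= !count_cat /= addnCA.
- move=> a; rewrite /= !in_all_cat /=; tauto.
- move=> P; rewrite /= !all_factors_cat /=; tauto.
Qed.

Lemma split_has T (p : pred T) (s : seq T) : has p s ->
  exists l1 y l2, s = l1 ++ y :: l2 /\ p y /\ ~~ has p l1.
Proof.
elim: s => [|y s IH] //= /orP [Hy|Hs].
- by exists [::], y, s.
- case Hy: (p y).
  + by exists [::], y, s.
  + have [l1 [z [l2 [-> [Hz Hn]]]]] := IH Hs.
    by exists (y :: l1), z, l2; rewrite /= Hy.
Qed.

Definition symd (A B : {fset nat}) := (A `\` B) `|` (B `\` A).

Lemma in_symd A B x : (x \in symd A B) = (x \in A) (+) (x \in B).
Proof. by rewrite /symd in_fsetU !in_fsetD; case: (x \in A); case: (x \in B). Qed.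

Lemma card_symd A B : odd #|` symd A B| = odd #|` A| (+) odd #|` B|.
Proof.
have H0 : (A `\` B) `&` (B `\` A) = fset0.
  apply/fsetP => x; rewrite in_fsetI !in_fsetD in_fset0.
  by case: (x \in A); case: (x \in B).
have H1 := cardfsUI (A `\` B) (B `\` A).
rewrite H0 cardfs0 addn0 in H1.
have H2 := cardfsID B A. have H3 := cardfsID A B.
rewrite fsetIC in H3.
rewrite /symd H1.
rewrite -H2 -H3.
rewrite !oddD; by case: (odd _); case: (odd _); case: (odd _).
Qed.

Definition sd D (Rs : seq (relation D)) : {fset nat} :=
  foldr (fun S acc => symd (scope S) acc) fset0 Rs.

Lemma in_sd D (Rs : seq (relation D)) x : (x \in sd Rs) = odd (occ Rs x).
Proof.
elim: Rs => [|S Rs IH] /=; first by rewrite in_fset0.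
by rewrite in_symd IH /occ /= oddD; case: (x \in scope S).
Qed.

Lemma parity_nounary D (Rs : seq (relation D)) R :
  represents Rs R -> ~~ has (fun S => arity S == 1) Rs ->
  odd (ternary_count Rs) = odd (arity R).
Proof.
move=> [Hb [Ha [Hs Hm]]] Hn.
rewrite /arity.
have -> : scope R = sd Rs.
  apply/fsetP => x; rewrite Hs in_sd.
  have := Hb x; case: (occ Rs x) => [|[|[|]]] //.
elim: Rs Ha Hn {Hb Hs Hm} => [|S Rs IH] /=; first by [].
move=> [[_ H3] Ha] /norP [H1 Hn].
rewrite card_symd -IH //.
move: H3 H1; rewrite /arity.
by case: #|` scope S| => [|[|[|[|]]]].
Qed.

Lemma in_all_agree D (L : seq (relation D)) a a' :
  (forall y, 0 < occ L y -> a y = a' y) -> in_all L a -> in_all L a'.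
Proof.
elim: L => [|F L IH] //= Hag [HF HL]; split.
- have -> : restr (fun x => x \in scope F) a' = restr (fun x => x \in scope F) a.
    apply: functional_extensionality => y; rewrite /restr; case: ifP => // Hy.
    by rewrite Hag // /occ /= Hy.
  exact: HF.
- apply: IH HL => y Hy; apply: Hag; move: Hy; rewrite /occ /= addn_gt0 => ->; exact: orbT.
Qed.

Lemma unary_gamma D (U : relation D) L R x :
  wf_rel R -> represents (U :: L) R -> scope U = [fset x] -> occ (U :: L) x = 1 ->
  has_unary_cartesian_factor R.
Proof.
move=> Hwf [Hb [Ha [Hs Hm]]] HU Ho.
have HxR : x \in scope R by rewrite Hs Ho.
have HL : occ L x = 0 by move: Ho; rewrite /occ /= HU in_fset1 eqxx /=; lia.
have EU : forall a : nat -> option D, restr (fun y => y \in scope U) a = restr (pred1 x) a.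
  by move=> a; apply: functional_extensionality => y; rewrite /restr HU in_fset1.
exists x; split => //.
exists (rmem U), (fun c => exists b', rmem R b' /\
   restr (fun y => (y \in scope R) && (y != x)) b' = c).
move=> a; split.
- move=> Ha0; split; first exact: Hwf.
  have [_ [a0 [[_ [HU0 _]] Hag]]] := (Hm a).1 Ha0.
  split; last by exists a.
  rewrite EU in HU0.
  suff <- : restr (pred1 x) a0 = restr (pred1 x) a by [].
  apply: functional_extensionality => y; rewrite /restr /=.
  case: eqP => // ->; apply: Hag; by rewrite Ho.
- move=> [Hd [HP [b' [Hb' Hr]]]].
  have [_ [a0 [[Hd0 [HU0 HL0]] Hag]]] := (Hm b').1 Hb'.
  apply/Hm; split.
  + by move=> y; rewrite -Hs Hd.
  + exists (fun y => if y == x then a x else a0 y); split; [split|].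
    * move=> y; case: eqP => [->|Hne]; first by rewrite Hd HxR Ho.
      exact: Hd0.
    * split.
      -- rewrite EU.
         have -> : restr (pred1 x) (fun y => if y == x then a x else a0 y)
                   = restr (pred1 x) a.
           by apply: functional_extensionality => y; rewrite /restr /=; case: eqP => // ->.
         exact: HP.
      -- apply: in_all_agree HL0 => y Hy; case: eqP => // Hyx.
         by move: Hy; rewrite Hyx HL.
    * move=> y Hy; case: eqP => [->//|/eqP Hne].
      rewrite Hag //.
      have := f_equal (fun f => f y) Hr; rewrite /restr Hs Hy Hne /=.
      done.
Qed.

Definition upd D (b : nat -> option D) x d : nat -> option D :=
  fun y => if y == x then Some d else b y.

Definition proj_rel D (U S : relation D) x : relation D :=
  Relation (scope S `\ x)
   (fun b => has_dom (fun y => y \in scope S `\ x) b /\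
      exists d, rmem S (upd b x d) /\ rmem U (upd (fun _ => None) x d)).

Lemma unary_internal D (U S : relation D) L R x :
  represents (U :: S :: L) R -> scope U = [fset x] -> x \in scope S ->
  occ L x = 0 -> represents (proj_rel U S x :: L) R.
Proof.
move=> [Hb [Ha [Hs Hm]]] HU HxS HL.
set S' := proj_rel U S x.
have Hocc : forall y, y != x -> occ (S' :: L) y = occ (U :: S :: L) y.
  by move=> y Hy; rewrite /occ /= in_fsetD1 HU in_fset1 (negbTE Hy) /=.
have HoccX : occ (S' :: L) x = 0.
  by move: HL; rewrite /occ /= in_fsetD1 eqxx /=.
have HoccX2 : occ (U :: S :: L) x = 2.
  by move: HL; rewrite /occ /= HU in_fset1 eqxx HxS => ->.
have Heq1 : forall y, (occ (S' :: L) y == 1) = (occ (U :: S :: L) y == 1).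
  move=> y; case: (eqVneq y x) => [->|Hy]; first by rewrite HoccX HoccX2.
  by rewrite Hocc.
split; [|split; [|split]].
- move=> y; case: (eqVneq y x) => [->|Hy]; first by rewrite HoccX.
  rewrite Hocc //; exact: Hb.
- case: Ha => _ [[_ HS3] HLf]; split => //; split.
  + by move=> b /= [Hd _].
  + move: HS3; rewrite /arity /=.
    have := cardfsD1 x (scope S); rewrite HxS /=; lia.
- by move=> y; rewrite Heq1; exact: Hs.
- move=> b; rewrite Hm; split.
  + move=> [Hd [a [[Hda Hia] Hag]]]; split.
      by move=> y; rewrite Heq1; exact: Hd.
    have [d Hax] : exists d, a x = Some d.
      by have := Hda x; rewrite HoccX2; case: (a x) => // d _; exists d.
    exists (fun y => if y == x then None else a y); split; [split|].
    * move=> y; case: eqVneq => [->|Hy]; first by rewrite HoccX.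
      rewrite Hocc //; exact: Hda.
    * case: Hia => [HUa [HSa HLa]]; split.
      -- split.
         ++ move=> y; rewrite /restr; case: ifP => Hy //.
            have Hyx : y != x by move: Hy; rewrite /= in_fsetD1 => /andP [].
            have HyS : y \in scope S by move: Hy; rewrite /= in_fsetD1 => /andP [].
            rewrite (negbTE Hyx) Hda /occ /= HyS; lia.
         ++ exists d; split.
            ** have -> : upd (restr (fun y => y \in scope S') (fun y => if y == x then None else a y)) x d
                   = restr (fun y => y \in scope S) a.
                 apply: functional_extensionality => y.
                 rewrite /upd /restr /= in_fsetD1.
                 by case: eqVneq => [->|Hy] /=; [rewrite HxS Hax|].
               exact: HSa.
            ** have -> : upd (fun _ => None) x d = restr (fun y => y \in scope U) a.
                 apply: functional_extensionality => y.
                 by rewrite /upd /restr HU in_fset1; case: eqP => // ->.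
               exact: HUa.
      -- apply: in_all_agree HLa => y Hy; case: eqP => [Hyx|//].
         by move: Hy; rewrite Hyx HL.
    * move=> y Hy; case: eqVneq => [Hyx|Hyx].
        by move: Hy; rewrite Hyx HoccX.
      by apply: Hag; rewrite -Heq1.
  + move=> [Hd [a' [[Hda' Hia'] Hag']]]; split.
      by move=> y; rewrite -Heq1; exact: Hd.
    case: Hia' => [[_ [d [HSd HUd]]] HLa'].
    exists (upd a' x d); split; [split|].
    * move=> y; rewrite /upd; case: eqVneq => [->|Hy]; first by rewrite HoccX2.
      rewrite -Hocc //; exact: Hda'.
    * split.
      -- have -> : restr (fun y => y \in scope U) (upd a' x d) = upd (fun _ => None) x d.
           apply: functional_extensionality => y.
           by rewrite /restr /upd HU in_fset1; case: eqP.
         exact: HUd.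
      -- split.
         ++ have -> : restr (fun y => y \in scope S) (upd a' x d)
                = upd (restr (fun y => y \in scope S') a') x d.
              apply: functional_extensionality => y.
              rewrite /restr /upd /= in_fsetD1.
              by case: eqVneq => [->|Hy] /=; [rewrite HxS|].
            exact: HSd.
         ++ apply: in_all_agree HLa' => y Hy; rewrite /upd; case: eqP => [Hyx|//].
            by move: Hy; rewrite Hyx HL.
    * move=> y Hy; rewrite /upd; case: eqVneq => [Hyx|Hyx].
        by move: Hy; rewrite Hyx HoccX2.
      by apply: Hag'; rewrite Heq1.
Qed.

Theorem corollary42 (D : Type) (R : relation D) :
  wf_rel R -> finite_ternarity R -> ~ has_unary_cartesian_factor R ->
  forall k, is_ter R k -> odd k = odd (arity R).
Proof.
move=> Hwf _ Hnc k [[Rs [Hrep Hk]] Hmin].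
move: (ltnSn (size Rs)); move: {2}(size Rs).+1 => N.
elim: N Rs Hrep Hk => [//|N IH] Rs Hrep Hk Hsz.
case Hh: (has (fun S => arity S == 1) Rs); last first.
  by rewrite -Hk; apply: parity_nounary Hrep _; rewrite Hh.
have [l1 [U [l2 [Es [HU1 _]]]]] := split_has Hh.
move: Hrep; rewrite Es => /represents_rot Hrep.
have Hk' : ternary_count (U :: l1 ++ l2) = k.
  by rewrite -Hk Es /ternary_count /= !count_cat /= addnCA.
have Hsz' : size (U :: l1 ++ l2) < N.+1.
  by move: Hsz; rewrite Es /= !size_cat /= addnS.
clear Es Hh Hk Hsz.
have [x HUx] : exists x, scope U = [fset x] by apply/cardfs1P.
move: Hrep Hk' Hsz'; set L := l1 ++ l2 => Hrep Hk' Hsz'.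
have Hocc := Hrep.1 x.
have HxU : x \in scope U by rewrite HUx in_fset1.
have HoL : occ (U :: L) x = (occ L x).+1 by rewrite /occ /= HxU.
case HL0 : (occ L x) => [|m].
  by exfalso; apply: Hnc; apply: (unary_gamma Hwf Hrep HUx); rewrite HoL HL0.
have Hm0 : m = 0 by move: Hocc; rewrite HoL HL0; lia.
subst m.
have Hhas : has (fun S => x \in scope S) L by rewrite has_count; move: HL0; rewrite /occ => ->.
have [m1 [S [m2 [EL [HxS _]]]]] := split_has Hhas.
have HM : occ (m1 ++ m2) x = 0.
  by move: HL0; rewrite EL /occ !count_cat /= HxS; lia.
move: Hrep; rewrite EL => Hrep.
have Hrep2 : represents (U :: S :: m1 ++ m2) R.
  apply: (@represents_rot _ [:: S] (m1 ++ m2) U).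
  exact: (@represents_rot _ (U :: m1) m2 S R Hrep).
have Hrep3 := unary_internal Hrep2 HUx HxS HM.
have Har : arity (proj_rel U S x) = (arity S).-1.
  by rewrite /arity /= (cardfsD1 x (scope S)) HxS.
have HU3 : (arity U == 3) = false by move: HU1 => /eqP ->.
have Htc : ternary_count (U :: L) = ((arity S == 3) + ternary_count (m1 ++ m2))%N.
  by rewrite /ternary_count /= HU3 EL !count_cat /= add0n addnCA.
case HS3 : (arity S == 3).
  have := Hmin _ Hrep3.
  rewrite /ternary_count /= Har (eqP HS3) /= -/(ternary_count (m1 ++ m2)).
  move: Hk'; rewrite Htc HS3 => <-; lia.
apply: (IH _ Hrep3).
  rewrite -Hk' Htc HS3 /ternary_count /= Har.
  have : arity S <= 3 by move: Hrep3 => _; case: Hrep2 => _ [[_ [[_ ?] _]] _].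
  move: HS3; case: (arity S) => [|[|[|[|]]]] //.
move: Hsz'; rewrite EL /= !size_cat /=; lia.
Qed.
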